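(* Let $(\widetilde R,\widetilde m,k)$ be an Artin local ring, $I\subseteq\widetilde R$ an ideal with $\widetilde m I=0$, $R=\widetilde R/I$, and let $A\subseteq\mathrm{M}_n(R)$ be a rank $d$ mold over $R$ (an $R$-subalgebra with $A$ and $\mathrm{M}_n(R)/A$ free, $\mathrm{rank}\,A=d$). Put $A_0=A\otimes_R k\subseteq\mathrm{M}_n(k)$. Choose an $R$-basis $a_1,\dots,a_d$ of $A$, lifts $S(a_i)\in\mathrm{M}_n(\widetilde R)$ of $a_i$, and lifts $S(a_ia_j)\in\bigoplus_l\widetilde R\,S(a_l)$ of $a_ia_j$. Define the $k$-linear map $c:A_0\otimes_kA_0\to(\mathrm{M}_n(k)/A_0)\otimes_kI$ by sending $\bar a_i\otimes\bar a_j$ (with $\bar a_i=a_i\bmod\widetilde m$) to the class of $S(a_ia_j)-S(a_i)S(a_j)\in\mathrm{M}_n(I)=\mathrm{M}_n(k)\otimes_kI$. Then $c$ is a Hochschild $2$-cocycle, its class $[c]\in H^2(A_0,(\mathrm{M}_n(k)/A_0)\otimes_kI)$ does not depend on the choices of basis and lifts, and there exists a rank $d$ mold $\widetilde A\subseteq\mathrm{M}_n(\widetilde R)$ over $\widetilde R$ with $\widetilde A\otimes_{\widetilde R}R=A$ if and only if $[c]=0$.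
   Context: $(\mathrm{M}_n(k)/A_0)\otimes_kI$ is an $A_0$-bimodule by $a(\overline X\otimes x)b=\overline{aXb}\otimes x$; $I$ is a finite-dimensional $k$-vector space since $\widetilde mI=0$. Hochschild cohomology $H^2$ is computed by the bar complex $C^p(A_0,M)=\mathrm{Hom}_k(A_0^{\otimes p},M)$ with the standard Hochschild differential. *)

(* Defs.v *)
From HB Require Import structures.
From mathcomp Require Import all_boot all_order all_algebra.
Set Implicit Arguments. Unset Strict Implicit. Unset Printing Implicit Defensive.
Import GRing.Theory.
Local Open Scope ring_scope.

Definition is_ideal (T : comPzRingType) (J : T -> Prop) : Prop :=
  J 0 /\ (forall x y, J x -> J y -> J (x + y)) /\ (forall r x, J x -> J (r * x)).

Definition artinian (T : comPzRingType) : Prop :=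
  forall J : nat -> T -> Prop, (forall i, is_ideal (J i)) ->
    (forall i x, J i.+1 x -> J i x) ->
    exists N, forall i, (N <= i)%N -> forall x, J i x <-> J N x.

Definition is_subalg (T : comPzRingType) (n : nat) (A : 'M[T]_n -> Prop) : Prop :=
  A 1%:M /\ (forall x y, A x -> A y -> A (x + y)) /\
  (forall (r : T) x, A x -> A (r *: x)) /\ (forall x y, A x -> A y -> A (x *m y)).

Definition is_basis_of (T : comPzRingType) (n d : nat) (A : 'M[T]_n -> Prop)
    (a : 'I_d -> 'M[T]_n) : Prop :=
  (forall i, A (a i)) /\
  (forall x, A x -> exists r : 'I_d -> T, x = \sum_i r i *: a i) /\
  (forall r : 'I_d -> T, \sum_i r i *: a i = 0 -> forall i, r i = 0).

(* M_n(T)/A is free: the classes of some family b form a basis of the quotient. *)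
Definition quotient_free (T : comPzRingType) (n : nat) (A : 'M[T]_n -> Prop) : Prop :=
  exists e (b : 'I_e -> 'M[T]_n),
    (forall x, exists r : 'I_e -> T, A (x - \sum_j r j *: b j)) /\
    (forall r : 'I_e -> T, A (\sum_j r j *: b j) -> forall j, r j = 0).

Definition mold (T : comPzRingType) (n d : nat) (A : 'M[T]_n -> Prop) : Prop :=
  is_subalg A /\ (exists a : 'I_d -> 'M[T]_n, is_basis_of A a) /\ quotient_free A.

(* ---------- The Hochschild setting ----------
   Rt = \widetilde R, kap : Rt -> k the residue map (kernel = \widetilde m),
   I an ideal with \widetilde m I = 0, A0 \subseteq M_n(k).
   The coefficient bimodule (M_n(k)/A0) \otimes_k I is realised as
   M_n(I) (= M_n(k) \otimes_k I) modulo the subspace A0 \otimes_k I. *)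

Definition inMI (Rt : comPzRingType) (n : nat) (I : Rt -> Prop) (Y : 'M[Rt]_n) : Prop :=
  forall i j, I (Y i j).

(* Y \in A0 \otimes_k I \subseteq M_n(I): a finite sum of  x *: B  with x \in I and
   B a lift of an element of A0 (the element  (B mod m) \otimes x). *)
Definition inN (Rt : comPzRingType) (k : fieldType) (kap : Rt -> k) (n : nat)
    (I : Rt -> Prop) (A0 : 'M[k]_n -> Prop) (Y : 'M[Rt]_n) : Prop :=
  exists m (x : 'I_m -> Rt) (B : 'I_m -> 'M[Rt]_n),
    (forall t, I (x t)) /\ (forall t, A0 (map_mx kap (B t))) /\
    Y = \sum_t x t *: B t.

(* A 1-cochain: a k-linear map A0 -> M (represented modulo A0 \otimes I).
   The k-action on M_n(I) is  (kap r) . Y = r *: Y  (well defined as m I = 0). *)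
Definition cochain1 (Rt : comPzRingType) (k : fieldType) (kap : Rt -> k) (n : nat)
    (I : Rt -> Prop) (A0 : 'M[k]_n -> Prop) (g : 'M[k]_n -> 'M[Rt]_n) : Prop :=
  (forall x, A0 x -> inMI I (g x)) /\
  (forall (r : Rt) x x', A0 x -> A0 x' ->
     inN kap I A0 (g (kap r *: x + x') - (r *: g x + g x'))).

Definition cochain2 (Rt : comPzRingType) (k : fieldType) (kap : Rt -> k) (n : nat)
    (I : Rt -> Prop) (A0 : 'M[k]_n -> Prop) (f : 'M[k]_n -> 'M[k]_n -> 'M[Rt]_n) : Prop :=
  (forall x y, A0 x -> A0 y -> inMI I (f x y)) /\
  (forall (r : Rt) x x' y, A0 x -> A0 x' -> A0 y ->
     inN kap I A0 (f (kap r *: x + x') y - (r *: f x y + f x' y))) /\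
  (forall (r : Rt) x y y', A0 x -> A0 y -> A0 y' ->
     inN kap I A0 (f x (kap r *: y + y') - (r *: f x y + f x y'))).

(* The bimodule action of a \in A0 on M_n(I) is left/right multiplication by
   any lift of a to M_n(Rt). *)
Definition cocycle2 (Rt : comPzRingType) (k : fieldType) (kap : Rt -> k) (n : nat)
    (I : Rt -> Prop) (A0 : 'M[k]_n -> Prop) (f : 'M[k]_n -> 'M[k]_n -> 'M[Rt]_n) : Prop :=
  forall x y z (X Z : 'M[Rt]_n), A0 x -> A0 y -> A0 z ->
    map_mx kap X = x -> map_mx kap Z = z ->
    inN kap I A0 (X *m f y z - f (x *m y) z + f x (y *m z) - f x y *m Z).

Definition coboundary2 (Rt : comPzRingType) (k : fieldType) (kap : Rt -> k) (n : nat)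
    (I : Rt -> Prop) (A0 : 'M[k]_n -> Prop) (f : 'M[k]_n -> 'M[k]_n -> 'M[Rt]_n) : Prop :=
  exists g, cochain1 kap I A0 g /\
    forall x y (X Y : 'M[Rt]_n), A0 x -> A0 y ->
      map_mx kap X = x -> map_mx kap Y = y ->
      inN kap I A0 (f x y - (X *m g y - g (x *m y) + g x *m Y)).

Definition choice_data (Rt R : comPzRingType) (pi : Rt -> R) (n d : nat)
    (A : 'M[R]_n -> Prop) (a : 'I_d -> 'M[R]_n) (Sa : 'I_d -> 'M[Rt]_n)
    (Sp : 'I_d -> 'I_d -> 'M[Rt]_n) : Prop :=
  is_basis_of A a /\
  (forall i, map_mx pi (Sa i) = a i) /\
  (forall i j, map_mx pi (Sp i j) = a i *m a j) /\
  (forall i j, exists t : 'I_d -> Rt, Sp i j = \sum_l t l *: Sa l).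

(* A0 = A \otimes_R k, viewed inside M_n(k) as the image of A. *)
Definition A0_of (R : comPzRingType) (k : fieldType) (rho : R -> k) (n : nat)
    (A : 'M[R]_n -> Prop) (x : 'M[k]_n) : Prop :=
  exists a, A a /\ x = map_mx rho a.

Definition is_c_of (Rt R : comPzRingType) (k : fieldType) (kap : Rt -> k) (rho : R -> k)
    (n d : nat) (I : Rt -> Prop) (A : 'M[R]_n -> Prop)
    (a : 'I_d -> 'M[R]_n) (Sa : 'I_d -> 'M[Rt]_n) (Sp : 'I_d -> 'I_d -> 'M[Rt]_n)
    (f : 'M[k]_n -> 'M[k]_n -> 'M[Rt]_n) : Prop :=
  cochain2 kap I (A0_of rho A) f /\
  forall i j, inN kap I (A0_of rho A)
    (f (map_mx rho (a i)) (map_mx rho (a j)) - (Sp i j - Sa i *m Sa j)).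

(* Main.v *)
Require Import Defs.
From HB Require Import structures.
From mathcomp Require Import all_boot all_order all_algebra ring.
From Stdlib Require Import ClassicalEpsilon.
Import GRing.Theory.
Local Open Scope ring_scope.
Set Implicit Arguments. Unset Strict Implicit. Unset Printing Implicit Defensive.

Definition fbasis (T : comPzRingType) n m (c : 'I_m -> 'M[T]_n) : Prop :=
  (forall x, exists r : 'I_m -> T, x = \sum_i r i *: c i) /\
  (forall r : 'I_m -> T, \sum_i r i *: c i = 0 -> forall i, r i = 0).

Definition cmb (T : Type) d e (a : 'I_d -> T) (b : 'I_e -> T) : 'I_(d+e) -> T :=
  fun i => match split i with inl i => a i | inr j => b j end.

Lemma cmbl T d e (a : 'I_d -> T) (b : 'I_e -> T) i : cmb a b (lshift e i) = a i.
Proof. by rewrite /cmb (unsplitK (inl _ i)). Qed.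
Lemma cmbr T d e (a : 'I_d -> T) (b : 'I_e -> T) i : cmb a b (rshift d i) = b i.
Proof. by rewrite /cmb (unsplitK (inr _ i)). Qed.

Lemma sum_cmb (T : comPzRingType) n d e (a : 'I_d -> 'M[T]_n) b (r : 'I_(d+e) -> T) :
  \sum_i r i *: cmb a b i = \sum_i r (lshift e i) *: a i + \sum_j r (rshift d j) *: b j.
Proof. by rewrite big_split_ord /=; congr (_ + _); apply: eq_bigr => i _; rewrite ?cmbl ?cmbr. Qed.

Lemma fb_uniq (T : comPzRingType) n m (c : 'I_m -> 'M[T]_n) r s :
  fbasis c -> \sum_i r i *: c i = \sum_i s i *: c i -> forall i, r i = s i.
Proof.
move=> [_ hi] e i; apply/eqP; rewrite -subr_eq0; apply/eqP.
apply: (hi (fun i => r i - s i)).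
by rewrite (eq_bigr (fun i => r i *: c i - s i *: c i)) ?sumrB ?e ?subrr // => j _; rewrite scalerBl.
Qed.

Definition ideal (T : comPzRingType) (J : T -> Prop) :=
  J 0 /\ (forall x y, J x -> J y -> J (x + y)) /\ (forall r x, J x -> J (r * x)).

Lemma ideal_sum (T : comPzRingType) (J : T -> Prop) (m : nat) (F : 'I_m -> T) :
  ideal J -> (forall i, J (F i)) -> J (\sum_i F i).
Proof. by move=> [h0 [hD _]] hF; apply: big_ind. Qed.

Lemma fb_ideal (T : comPzRingType) n m (c : 'I_m -> 'M[T]_n) (J : T -> Prop) r :
  fbasis c -> ideal J -> (forall p q, J ((\sum_i r i *: c i) p q)) -> forall i, J (r i).
Proof.
move=> fb hJ hz.
have [al hal] : exists al : 'I_n -> 'I_n -> 'I_m -> T,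
    forall p q, delta_mx p q = \sum_i al p q i *: c i.
  exists (fun p q => proj1_sig (constructive_indefinite_description _ (fb.1 (delta_mx p q)))).
  by move=> p q; case: constructive_indefinite_description.
set z := \sum_i r i *: c i in hz.
have ez : z = \sum_i (\sum_p \sum_q z p q * al p q i) *: c i.
  rewrite {1}[z]matrix_sum_delta.
  transitivity (\sum_p \sum_q \sum_i (z p q * al p q i) *: c i).
    apply: eq_bigr => p _; apply: eq_bigr => q _.
    by rewrite hal scaler_sumr; apply: eq_bigr => i _; rewrite scalerA.
  symmetry; under eq_bigr => i _ do rewrite scaler_suml.
  rewrite exchange_big /=; apply: eq_bigr => p _.
  under eq_bigr => i _ do rewrite scaler_suml.
  by rewrite exchange_big.
move=> i; rewrite (fb_uniq fb ez i).
apply: ideal_sum => // p; apply: ideal_sum => // q.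
by rewrite mulrC; apply hJ.2.2.
Qed.

Lemma fb_map (T S : comPzRingType) (phi : {rmorphism T -> S}) n m (c : 'I_m -> 'M[T]_n) :
  (forall y, exists x, phi x = y) -> fbasis c -> fbasis (fun i => map_mx phi (c i)).
Proof.
move=> surj fb.
pose L y := proj1_sig (constructive_indefinite_description _ (surj y)).
have HL y : phi (L y) = y by rewrite /L; case: constructive_indefinite_description.
split.
  move=> x; have [r hr] := fb.1 (map_mx L x); exists (fun i => phi (r i)).
  have -> : x = map_mx phi (map_mx L x) by apply/matrixP => p q; rewrite !mxE HL.
  rewrite hr map_mx_sum; apply: eq_bigr => i _; by rewrite map_mxZ.
move=> s hs.
have hJ : ideal (fun t : T => phi t = 0).
  split; first by rewrite rmorph0.
  by split=> [x y hx hy|r x hx]; rewrite ?rmorphD ?rmorphM hx ?hy ?addr0 ?mulr0.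
have h := @fb_ideal _ _ _ _ _ (fun i => L (s i)) fb hJ.
move=> i; rewrite -(HL (s i)); apply: h => p q.
have : map_mx phi (\sum_i L (s i) *: c i) = 0.
  rewrite map_mx_sum -[RHS]hs; apply: eq_bigr => j _; by rewrite map_mxZ HL.
by move/matrixP=> /(_ p q); rewrite !mxE.
Qed.

Lemma sub0 (T : comPzRingType) n (A : 'M[T]_n -> Prop) : is_subalg A -> A 0.
Proof. by move=> [h1 [_ [hZ _]]]; rewrite -(scale0r 1%:M); apply: hZ. Qed.

Lemma subB (T : comPzRingType) n (A : 'M[T]_n -> Prop) x y : is_subalg A -> A x -> A y -> A (x - y).
Proof. by move=> [h1 [hD [hZ _]]] hx hy; rewrite -scaleN1r; apply: hD => //; apply: hZ. Qed.

Lemma subsum (T : comPzRingType) n (A : 'M[T]_n -> Prop) m (r : 'I_m -> T) x :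
  is_subalg A -> (forall i, A (x i)) -> A (\sum_i r i *: x i).
Proof.
move=> hA hx; apply: big_ind; first exact: sub0.
  by move=> ? ? ? ?; apply: hA.2.1.
by move=> i _; apply: hA.2.2.1.
Qed.

Lemma fb_of_mold (T : comPzRingType) n d (A : 'M[T]_n -> Prop) (a : 'I_d -> 'M[T]_n) e
    (b : 'I_e -> 'M[T]_n) :
  is_subalg A -> is_basis_of A a ->
  (forall x, exists r : 'I_e -> T, A (x - \sum_j r j *: b j)) ->
  (forall r : 'I_e -> T, A (\sum_j r j *: b j) -> forall j, r j = 0) ->
  fbasis (cmb a b).
Proof.
move=> hA [ha [hsp hind]] hq1 hq2; split.
  move=> x; have [r hr] := hq1 x; have [u hu] := hsp _ hr.
  exists (cmb u r); rewrite sum_cmb.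
  under eq_bigr do rewrite cmbl. under [X in _ + X]eq_bigr do rewrite cmbr.
  by rewrite -hu subrK.
move=> r; rewrite sum_cmb => h0.
have hr2 : forall j, r (rshift d j) = 0.
  apply: hq2; have -> : \sum_j r (rshift d j) *: b j = - \sum_i r (lshift e i) *: a i.
    by apply/eqP; rewrite -addr_eq0 addrC h0.
  by rewrite -scaleN1r; apply: hA.2.2.1; apply: subsum.
have hr1 : forall i, r (lshift e i) = 0.
  apply: hind; move: h0; have -> : \sum_j r (rshift d j) *: b j = 0.
    by apply: big1 => j _; rewrite hr2 scale0r.
  by rewrite addr0.
by move=> i; rewrite -(splitK i); case: (split i) => j /=.
Qed.

Lemma zid1 (V : zmodType) (a b c d1 : V) : a - (d1 + b) = (a - (b + c)) + (c - d1).
Proof. by rewrite !opprD !addrA subrK addrAC. Qed.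
Lemma zid2 (V : zmodType) (a1 a2 b1 b2 c1 c2 : V) :
  (a1 + a2) - ((b1 + b2) + (c1 + c2)) = (a1 - (b1 + c1)) + (a2 - (b2 + c2)).
Proof. by rewrite !opprD !addrA; congr (_ + _); rewrite addrAC -!addrA; congr (_ + _); rewrite addrC !addrA addrAC. Qed.
Lemma zid3 (V : zmodType) (a1 a2 b1 b2 c1 c2 : V) :
  (a1 - a2) - ((b1 - b2) + (c1 - c2)) = (a1 - (b1 + c1)) - (a2 - (b2 + c2)).
Proof. by rewrite zid2 !opprD. Qed.

Lemma zc2 (V : zmodType) (P Q U W X : V) : (P - Q) - (U - X) + (W - P) - (X - Q) = W - U.
Proof. rewrite !opprB !addrA [LHS](ACl (5*4*1*6*2*7*3*8)) /=. by rewrite addrK subrK addrK. Qed.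

Lemma chf (X Y : Type) (P : X -> Y -> Prop) : (forall x, exists y, P x y) -> exists f, forall x, P x (f x).
Proof.
move=> h; exists (fun x => proj1_sig (constructive_indefinite_description _ (h x))).
by move=> x; case: constructive_indefinite_description.
Qed.

Lemma zc3 (V : zmodType) (X1 UU TU TG UG GU : V) :
  (X1 - UU) - ((TU + TG) - (UU + UG + GU)) - ((UG - TG) + GU) = X1 - TU.
Proof. rewrite !(opprD, opprB, opprK, addrA) [LHS](ACl (1*6*2*3*7*8*4*9*5*10)) /=. by rewrite subrK subrK addrK addrK. Qed.

Lemma zc4 (V : zmodType) (SaSa Sg gS Sq Tg f gab : V) :
  SaSa + Sg + gS - (Sq + Tg) = ((f - (Sq - SaSa)) - (f - (Sg - gab + gS))) + (gab - Tg).
Proof. rewrite !(opprD, opprB, opprK, addrA) [RHS](ACl (2*4*6*3*9*1*7*5*8)) /=. by rewrite addrK subrK. Qed.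
Lemma zc5 (V : zmodType) (AA AG GA TA TG : V) :
  (TA - TG - (AA - AG - (GA - 0))) - (AG - TG + GA) = TA - AA.
Proof. rewrite !(opprD, opprB, opprK, addrA, subr0) [LHS](ACl (1*5*2*6*3*8*4*7)) /=. by rewrite subrK addrK addrK. Qed.

Lemma fb_ext (T : comPzRingType) n m (c1 c2 : 'I_m -> 'M[T]_n) :
  (forall i, c1 i = c2 i) -> fbasis c1 -> fbasis c2.
Proof.
move=> h [h1 h2]; split.
  by move=> x; have [r hr] := h1 x; exists r; rewrite hr; apply: eq_bigr => i _; rewrite h.
by move=> r hr; apply: h2; rewrite -[RHS]hr; apply: eq_bigr => i _; rewrite h.
Qed.

Section Main.
Variables (Rt R : comPzRingType) (k : fieldType)
    (kap : {rmorphism Rt -> k}) (pi : {rmorphism Rt -> R}) (rho : {rmorphism R -> k})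
    (I : Rt -> Prop) (n d : nat) (A : 'M[R]_n -> Prop) (e : nat) (b : 'I_e -> 'M[R]_n).
Hypotheses (ksurj : forall y : k, exists x, kap x = y) (hI : is_ideal I)
  (hmI : forall x y, kap x = 0 -> I y -> x * y = 0)
  (psurj : forall y : R, exists x, pi x = y) (hpiI : forall x, pi x = 0 <-> I x)
  (hrp : forall x, rho (pi x) = kap x)
  (hA : is_subalg A)
  (hq1 : forall x, exists r : 'I_e -> R, A (x - \sum_j r j *: b j))
  (hq2 : forall r : 'I_e -> R, A (\sum_j r j *: b j) -> forall j, r j = 0)
  (a0 : 'I_d -> 'M[R]_n) (ha0 : is_basis_of A a0).

Local Notation M := 'M[Rt]_n.
Local Notation MI := (inMI I).
Local Notation A0 := (A0_of rho A).
Local Notation N := (inN kap I A0).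

Definition Lk (y : k) : Rt := proj1_sig (constructive_indefinite_description _ (ksurj y)).
Lemma kLk y : kap (Lk y) = y.
Proof. by rewrite /Lk; case: constructive_indefinite_description. Qed.
Definition Lpi (y : R) : Rt := proj1_sig (constructive_indefinite_description _ (psurj y)).
Lemma piLpi y : pi (Lpi y) = y.
Proof. by rewrite /Lpi; case: constructive_indefinite_description. Qed.

Lemma Iker x : I x -> kap x = 0.
Proof. by move=> /hpiI h; rewrite -hrp h rmorph0. Qed.

Lemma Imul y s s' : I y -> kap s = kap s' -> s * y = s' * y.
Proof.
move=> hy hs; apply/eqP; rewrite -subr_eq0 -mulrBl; apply/eqP; apply: hmI => //.
by rewrite rmorphB hs subrr.
Qed.

Lemma MI_pi (Y : M) : MI Y <-> map_mx pi Y = 0.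
Proof.
split=> [h|h i j]; first by apply/matrixP => i j; rewrite !mxE; apply/hpiI.
by apply/hpiI; move/matrixP: h => /(_ i j); rewrite !mxE.
Qed.

Lemma MI0 : MI (0 : M).
Proof. by apply/MI_pi; rewrite map_mx0. Qed.
Lemma MID (Y Z : M) : MI Y -> MI Z -> MI (Y + Z).
Proof. by move=> /MI_pi h1 /MI_pi h2; apply/MI_pi; rewrite map_mxD h1 h2 addr0. Qed.
Lemma MIN (Y : M) : MI Y -> MI (- Y).
Proof. by move=> /MI_pi h1; apply/MI_pi; rewrite map_mxN h1 oppr0. Qed.
Lemma MIB (Y Z : M) : MI Y -> MI Z -> MI (Y - Z).
Proof. by move=> h1 h2; apply: MID => //; apply: MIN. Qed.
Lemma MIZ r (Y : M) : MI Y -> MI (r *: Y).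
Proof. by move=> /MI_pi h1; apply/MI_pi; rewrite map_mxZ h1 scaler0. Qed.
Lemma MIMl (X Y : M) : MI Y -> MI (X *m Y).
Proof. by move=> /MI_pi h1; apply/MI_pi; rewrite map_mxM h1 mulmx0. Qed.
Lemma MIMr (X Y : M) : MI Y -> MI (Y *m X).
Proof. by move=> /MI_pi h1; apply/MI_pi; rewrite map_mxM h1 mul0mx. Qed.
Lemma MIsum m (F : 'I_m -> M) : (forall i, MI (F i)) -> MI (\sum_i F i).
Proof. by move=> h; apply: big_ind => //; [exact: MI0 | move=> ? ? ? ?; apply: MID]. Qed.
Lemma MIsumZ m (r : 'I_m -> Rt) (F : 'I_m -> M) : (forall i, MI (F i)) -> MI (\sum_i r i *: F i).
Proof. by move=> h; apply: MIsum => i; apply: MIZ. Qed.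

Lemma mapk (X : M) : map_mx kap X = map_mx rho (map_mx pi X).
Proof. by apply/matrixP => i j; rewrite !mxE hrp. Qed.

Lemma kapMI (Y : M) : MI Y -> map_mx kap Y = 0.
Proof. by move=> /MI_pi h; rewrite mapk h map_mx0. Qed.

Lemma scale_kap t t' (Y : M) : MI Y -> kap t = kap t' -> t *: Y = t' *: Y.
Proof. by move=> h ht; apply/matrixP => i j; rewrite !mxE; apply: Imul. Qed.

Lemma scale_kapM x (B B' : M) : I x -> map_mx kap B = map_mx kap B' -> x *: B = x *: B'.
Proof.
move=> hx hB; apply/matrixP => i j; rewrite !mxE mulrC [x * _]mulrC; apply: Imul => //.
by move/matrixP: hB => /(_ i j); rewrite !mxE.
Qed.

Lemma mul_kap_l (X X' Y : M) : MI Y -> map_mx kap X = map_mx kap X' -> X *m Y = X' *m Y.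
Proof.
move=> hY hX; apply/matrixP => i j; rewrite !mxE; apply: eq_bigr => l _; apply: Imul => //.
by move/matrixP: hX => /(_ i l); rewrite !mxE.
Qed.

Lemma mul_kap_r (X X' Y : M) : MI Y -> map_mx kap X = map_mx kap X' -> Y *m X = Y *m X'.
Proof.
move=> hY hX; apply/matrixP => i j; rewrite !mxE; apply: eq_bigr => l _.
rewrite mulrC [Y i l * _]mulrC; apply: Imul => //.
by move/matrixP: hX => /(_ l j); rewrite !mxE.
Qed.

Lemma MIsq (Y Z : M) : MI Y -> MI Z -> Y *m Z = 0.
Proof. by move=> hY hZ; rewrite (mul_kap_r (X' := 0) hY) ?mulmx0 // kapMI // map_mx0. Qed.

Lemma scale_I x (Y : M) : I x -> MI Y -> x *: Y = 0.
Proof. by move=> hx hY; rewrite (scale_kap (t' := 0) hY) ?scale0r // Iker // rmorph0. Qed.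

Lemma A0_lin r x x' : A0 x -> A0 x' -> A0 (kap r *: x + x').
Proof.
move=> [a [ha ->]] [a' [ha' ->]]; exists (pi r *: a + a'); split.
  by apply: hA.2.1 => //; apply: hA.2.2.1.
by rewrite map_mxD map_mxZ hrp.
Qed.
Lemma A0_mul x y : A0 x -> A0 y -> A0 (x *m y).
Proof. by move=> [a [ha ->]] [a' [ha' ->]]; exists (a *m a'); split; [apply: hA.2.2.2|rewrite map_mxM]. Qed.
Lemma A0_0 : A0 0.
Proof. by exists 0; split; [exact: sub0 | rewrite map_mx0]. Qed.
Lemma A0_of_A a : A a -> A0 (map_mx rho a).
Proof. by move=> ha; exists a. Qed.
Lemma A0_sum m (r : 'I_m -> Rt) (x : 'I_m -> 'M[k]_n) :
  (forall i, A0 (x i)) -> A0 (\sum_i kap (r i) *: x i).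
Proof.
move=> hx; apply: big_ind; first exact: A0_0.
  by move=> y z hy hz; rewrite -[y]scale1r -(rmorph1 kap); apply: A0_lin.
by move=> i _; rewrite -[_ *: _]addr0; apply: A0_lin => //; exact: A0_0.
Qed.

Lemma I0 : I 0. Proof. exact: hI.1. Qed.
Lemma ID x y : I x -> I y -> I (x + y). Proof. exact: hI.2.1. Qed.
Lemma IM r x : I x -> I (r * x). Proof. exact: hI.2.2. Qed.
Lemma IMr r x : I x -> I (x * r). Proof. by rewrite mulrC; apply: IM. Qed.
Lemma IN x : I x -> I (- x). Proof. by move=> h; rewrite -mulN1r; apply: IM. Qed.
Lemma Isum m (F : 'I_m -> Rt) : (forall i, I (F i)) -> I (\sum_i F i).
Proof. by move=> h; apply: big_ind => //; [exact: I0 | exact: ID]. Qed.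

Lemma MI_I x (B : M) : I x -> MI (x *: B).
Proof. by move=> hx i j; rewrite !mxE; apply: IMr. Qed.

Lemma mapLpi (x : 'M[R]_n) : map_mx pi (map_mx Lpi x) = x.
Proof. by apply/matrixP => i j; rewrite !mxE piLpi. Qed.

Definition Sp (s : 'I_d -> M) (Y : M) := exists u : 'I_d -> Rt, Y = \sum_i u i *: s i.
Definition Nsp (s : 'I_d -> M) (Y : M) :=
  exists u : 'I_d -> Rt, (forall i, I (u i)) /\ Y = \sum_i u i *: s i.

Lemma Sp0 s : Sp s 0.
Proof. by exists (fun _ => 0); rewrite big1 // => i _; rewrite scale0r. Qed.
Lemma SpD s Y Z : Sp s Y -> Sp s Z -> Sp s (Y + Z).
Proof.
move=> [u ->] [v ->]; exists (fun i => u i + v i); rewrite -big_split /=.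
by apply: eq_bigr => i _; rewrite scalerDl.
Qed.
Lemma SpZ s r Y : Sp s Y -> Sp s (r *: Y).
Proof.
move=> [u ->]; exists (fun i => r * u i); rewrite scaler_sumr.
by apply: eq_bigr => i _; rewrite scalerA.
Qed.
Lemma SpN s Y : Sp s Y -> Sp s (- Y).
Proof. by move=> h; rewrite -scaleN1r; apply: SpZ. Qed.
Lemma SpB s Y Z : Sp s Y -> Sp s Z -> Sp s (Y - Z).
Proof. by move=> h1 h2; apply: SpD => //; apply: SpN. Qed.
Lemma Spsum s m (F : 'I_m -> M) : (forall i, Sp s (F i)) -> Sp s (\sum_i F i).
Proof. by move=> h; apply: big_ind => //; [exact: Sp0 | exact: SpD]. Qed.
Lemma Spbase s i : Sp s (s i).
Proof.
exists (fun j => (j == i)%:R); rewrite (bigD1 i) //= eqxx scale1r big1 ?addr0 //.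
by move=> j /negbTE ->; rewrite scale0r.
Qed.

Lemma Nsp0 s : Nsp s 0.
Proof. by exists (fun _ => 0); split => [i|]; [exact: I0 | rewrite big1 // => i _; rewrite scale0r]. Qed.
Lemma NspD s Y Z : Nsp s Y -> Nsp s Z -> Nsp s (Y + Z).
Proof.
move=> [u [hu ->]] [v [hv ->]]; exists (fun i => u i + v i); split=> [i|]; first by apply: ID.
by rewrite -big_split /=; apply: eq_bigr => i _; rewrite scalerDl.
Qed.
Lemma NspZ s r Y : Nsp s Y -> Nsp s (r *: Y).
Proof.
move=> [u [hu ->]]; exists (fun i => r * u i); split=> [i|]; first by apply: IM.
by rewrite scaler_sumr; apply: eq_bigr => i _; rewrite scalerA.
Qed.

Lemma basis_A0 (a : 'I_d -> 'M[R]_n) (s : 'I_d -> M) i :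
  is_basis_of A a -> (forall i, map_mx pi (s i) = a i) -> A0 (map_mx kap (s i)).
Proof. by move=> [ha _] hs; rewrite mapk hs; apply: A0_of_A. Qed.

Lemma Nsp_single (a : 'I_d -> 'M[R]_n) (s : 'I_d -> M) x (B : M) :
  is_basis_of A a -> (forall i, map_mx pi (s i) = a i) ->
  I x -> A0 (map_mx kap B) -> Nsp s (x *: B).
Proof.
move=> [ha [hsp _]] hs hx [a' [ha' hB]].
have [rr hrr] := hsp _ ha'.
exists (fun i => x * Lpi (rr i)); split=> [i|]; first by apply: IMr.
have -> : x *: B = x *: \sum_i Lpi (rr i) *: s i.
  apply: scale_kapM => //; rewrite hB hrr !map_mx_sum; apply: eq_bigr => i _.
  by rewrite !map_mxZ mapk hs -hrp piLpi.
by rewrite scaler_sumr; apply: eq_bigr => i _; rewrite scalerA.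
Qed.

Lemma N_Nsp (a : 'I_d -> 'M[R]_n) (s : 'I_d -> M) Y :
  is_basis_of A a -> (forall i, map_mx pi (s i) = a i) -> N Y -> Nsp s Y.
Proof.
move=> ha hs [m [x [B [hx [hB ->]]]]]; apply: big_ind; first exact: Nsp0.
  exact: NspD.
by move=> t _; apply: (Nsp_single ha hs).
Qed.

Lemma Nsp_N (s : 'I_d -> M) Y : (forall i, A0 (map_mx kap (s i))) -> Nsp s Y -> N Y.
Proof. by move=> hs [u [hu ->]]; exists d, u, s. Qed.

Definition s0 i := map_mx Lpi (a0 i).
Lemma hs0 i : map_mx pi (s0 i) = a0 i.
Proof. exact: mapLpi. Qed.
Lemma A0s0 i : A0 (map_mx kap (s0 i)).
Proof. exact: basis_A0 ha0 hs0. Qed.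

Lemma N0 : N 0.
Proof. exact: (Nsp_N A0s0 (Nsp0 s0)). Qed.
Lemma ND Y Z : N Y -> N Z -> N (Y + Z).
Proof. by move=> /(N_Nsp ha0 hs0) h1 /(N_Nsp ha0 hs0) h2; apply: (Nsp_N A0s0); apply: NspD. Qed.
Lemma NZ r Y : N Y -> N (r *: Y).
Proof. by move=> /(N_Nsp ha0 hs0) h1; apply: (Nsp_N A0s0); apply: NspZ. Qed.
Lemma NN Y : N Y -> N (- Y).
Proof. by move=> h; rewrite -scaleN1r; apply: NZ. Qed.
Lemma NB Y Z : N Y -> N Z -> N (Y - Z).
Proof. by move=> h1 h2; apply: ND => //; apply: NN. Qed.
Lemma Nsum m (F : 'I_m -> M) : (forall i, N (F i)) -> N (\sum_i F i).
Proof. by move=> h; apply: big_ind => //; [exact: N0 | exact: ND]. Qed.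
Lemma N_single x (B : M) : I x -> A0 (map_mx kap B) -> N (x *: B).
Proof. by move=> hx hB; apply: (Nsp_N A0s0); apply: (Nsp_single ha0 hs0). Qed.
Lemma N_MI Y : N Y -> MI Y.
Proof. by move=> /(N_Nsp ha0 hs0) [u [hu ->]]; apply: MIsum => i; apply: MI_I. Qed.
Lemma N_lmul (X Y : M) : A0 (map_mx kap X) -> N Y -> N (X *m Y).
Proof.
move=> hX /(N_Nsp ha0 hs0) [u [hu ->]]; rewrite mulmx_sumr; apply: Nsum => i.
rewrite -scalemxAr; apply: N_single => //; rewrite map_mxM; apply: A0_mul => //; exact: A0s0.
Qed.
Lemma N_rmul (X Y : M) : A0 (map_mx kap X) -> N Y -> N (Y *m X).
Proof.
move=> hX /(N_Nsp ha0 hs0) [u [hu ->]]; rewrite mulmx_suml; apply: Nsum => i.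
rewrite -scalemxAl; apply: N_single => //; rewrite map_mxM; apply: A0_mul => //; exact: A0s0.
Qed.

Lemma span_I (a : 'I_d -> 'M[R]_n) (s : 'I_d -> M) Y :
  is_basis_of A a -> (forall i, map_mx pi (s i) = a i) -> Sp s Y -> MI Y -> N Y.
Proof.
move=> ha hs [u ->] /MI_pi h0; apply: (Nsp_N (fun i => basis_A0 i ha hs)).
exists u; split=> // i; apply/hpiI; move: i; apply: (ha.2.2 (fun i => pi (u i))).
rewrite -[RHS]h0 map_mx_sum; apply: eq_bigr => i _; by rewrite map_mxZ hs.
Qed.

Definition cbk (a : 'I_d -> 'M[R]_n) i := map_mx rho (cmb a b i).

Lemma rho_surj y : exists x, rho x = y.
Proof. by exists (pi (Lk y)); rewrite hrp kLk. Qed.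

Lemma fbk a : is_basis_of A a -> fbasis (cbk a).
Proof.
move=> ha; rewrite /cbk; apply: (fb_map (phi := rho) rho_surj).
exact: (fb_of_mold hA ha hq1 hq2).
Qed.

Definition coordf (a : 'I_d -> 'M[R]_n) (x : 'M[k]_n) : 'I_(d+e) -> k :=
  epsilon (inhabits (fun _ => 0)) (fun r => x = \sum_i r i *: cbk a i).

Lemma coordfP a x : is_basis_of A a -> x = \sum_i coordf a x i *: cbk a i.
Proof. by move=> ha; rewrite /coordf; exact: (epsilon_spec _ _ ((fbk ha).1 x)). Qed.

Lemma coordf_uniq a x r : is_basis_of A a -> x = \sum_i r i *: cbk a i -> forall i, coordf a x i = r i.
Proof. by move=> ha hx; apply: fb_uniq (fbk ha) _; rewrite -coordfP. Qed.

Lemma coordf_lin a c x x' i : is_basis_of A a ->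
  coordf a (c *: x + x') i = c * coordf a x i + coordf a x' i.
Proof.
move=> ha; apply: (coordf_uniq (r := fun i => c * coordf a x i + coordf a x' i) ha).
rewrite {1}(coordfP x ha) {1}(coordfP x' ha) scaler_sumr -big_split /=.
by apply: eq_bigr => j _; rewrite scalerDl scalerA.
Qed.

Lemma coordf_basis a j i : is_basis_of A a ->
  coordf a (map_mx rho (a j)) i = (i == lshift e j)%:R.
Proof.
move=> ha; apply: (coordf_uniq (r := fun i => (i == lshift e j)%:R) ha).
rewrite (bigD1 (lshift e j)) //= eqxx scale1r big1 ?addr0; first by rewrite /cbk cmbl.
by move=> l /negbTE ->; rewrite scale0r.
Qed.

Definition liftlin (a : 'I_d -> 'M[R]_n) (G : 'I_d -> M) (x : 'M[k]_n) : M :=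
  \sum_i Lk (coordf a x (lshift e i)) *: G i.

Lemma liftlin_MI a G x : (forall i, MI (G i)) -> MI (liftlin a G x).
Proof. by move=> h; apply: MIsumZ. Qed.

Lemma liftlin_lin a G r x x' : is_basis_of A a -> (forall i, MI (G i)) ->
  liftlin a G (kap r *: x + x') = r *: liftlin a G x + liftlin a G x'.
Proof.
move=> ha hG; rewrite /liftlin scaler_sumr -big_split /=; apply: eq_bigr => i _.
rewrite coordf_lin // scalerA -scalerDl; apply: scale_kap => //.
by rewrite rmorphD rmorphM !kLk.
Qed.

Lemma liftlin_basis a G j : is_basis_of A a -> (forall i, MI (G i)) ->
  liftlin a G (map_mx rho (a j)) = G j.
Proof.
move=> ha hG; rewrite /liftlin (bigD1 j) //= big1 ?addr0.
  rewrite coordf_basis // eqxx (scale_kap (t' := 1)) ?scale1r // kLk; by rewrite rmorph1.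
move=> i /negbTE hij; rewrite coordf_basis // (inj_eq (@lshift_inj _ _)) hij.
by rewrite (scale_kap (t' := 0)) ?scale0r // kLk rmorph0.
Qed.

Definition linN (h : 'M[k]_n -> M) := forall r x x', A0 x -> A0 x' ->
  N (h (kap r *: x + x') - (r *: h x + h x')).

Lemma linN_0 h : linN h -> N (h 0).
Proof.
move=> hh; have := hh (-1) 0 0 A0_0 A0_0.
by rewrite scaler0 addr0 scaleN1r addNr subr0.
Qed.

Lemma linN_sum h m (r : 'I_m -> Rt) (x : 'I_m -> 'M[k]_n) : linN h -> (forall i, A0 (x i)) ->
  N (h (\sum_i kap (r i) *: x i) - \sum_i r i *: h (x i)).
Proof.
move=> hh; elim: m r x => [|m IH] r x hx.
  by rewrite !big_ord0 subr0; apply: linN_0.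
rewrite !big_ord_recr /= (addrC (\sum_(i < m) _)).
rewrite (zid1 _ _ (h (\sum_(i < m) kap (r (widen_ord (leqnSn m) i)) *: x (widen_ord (leqnSn m) i)))).
apply: ND.
  by apply: hh => //; apply: A0_sum => i; apply: hx.
exact: IH.
Qed.

Lemma mapkLk (x : 'M[k]_n) : map_mx kap (map_mx Lk x) = x.
Proof. by apply/matrixP => i j; rewrite !mxE kLk. Qed.

Lemma A0_span (a : 'I_d -> 'M[R]_n) x : is_basis_of A a -> A0 x ->
  exists r : 'I_d -> Rt, x = \sum_i kap (r i) *: map_mx rho (a i).
Proof.
move=> [_ [hsp _]] [a' [ha' ->]]; have [rr ->] := hsp _ ha'.
exists (fun i => Lpi (rr i)); rewrite map_mx_sum; apply: eq_bigr => i _.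
by rewrite map_mxZ -hrp piLpi.
Qed.

Lemma linN_reduce h (a : 'I_d -> 'M[R]_n) : linN h -> is_basis_of A a ->
  (forall i, N (h (map_mx rho (a i)))) -> forall x, A0 x -> N (h x).
Proof.
move=> hh ha hb x hx; have [r ->] := A0_span ha hx.
have := linN_sum r hh (fun i => A0_of_A (ha.1 i)) => h1.
rewrite -(subrK (\sum_i r i *: h (map_mx rho (a i))) (h _)); apply: ND => //.
by apply: Nsum => i; apply: NZ.
Qed.

Lemma linN_D h1 h2 : linN h1 -> linN h2 -> linN (fun x => h1 x + h2 x).
Proof. by move=> l1 l2 r x x' hx hx'; rewrite scalerDr zid2; apply: ND; [apply: l1|apply: l2]. Qed.
Lemma linN_B h1 h2 : linN h1 -> linN h2 -> linN (fun x => h1 x - h2 x).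
Proof. by move=> l1 l2 r x x' hx hx'; rewrite scalerBr zid3; apply: NB; [apply: l1|apply: l2]. Qed.

Lemma linN_exact h : (forall r x x', A0 x -> A0 x' -> h (kap r *: x + x') = r *: h x + h x') -> linN h.
Proof. by move=> hh r x x' hx hx'; rewrite hh // subrr; exact: N0. Qed.

Lemma linN_lmul (Y : M) : MI Y -> linN (fun x => map_mx Lk x *m Y).
Proof.
move=> hY; apply: linN_exact => r x x' _ _.
rewrite (mul_kap_l (X' := r *: map_mx Lk x + map_mx Lk x')) //.
  by rewrite mulmxDl scalemxAl.
by rewrite map_mxD map_mxZ !mapkLk.
Qed.
Lemma linN_rmul (Y : M) : MI Y -> linN (fun x => Y *m map_mx Lk x).
Proof.
move=> hY; apply: linN_exact => r x x' _ _.
rewrite (mul_kap_r (X' := r *: map_mx Lk x + map_mx Lk x')) //.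
  by rewrite mulmxDr scalemxAr.
by rewrite map_mxD map_mxZ !mapkLk.
Qed.
Lemma linN_lmulN (X : M) h : A0 (map_mx kap X) -> linN h -> linN (fun x => X *m h x).
Proof.
move=> hX hh r x x' hx hx'; have := N_lmul hX (hh r x x' hx hx').
by rewrite mulmxBr mulmxDr scalemxAr.
Qed.
Lemma linN_rmulN (X : M) h : A0 (map_mx kap X) -> linN h -> linN (fun x => h x *m X).
Proof.
move=> hX hh r x x' hx hx'; have := N_rmul hX (hh r x x' hx hx').
by rewrite mulmxBl mulmxDl scalemxAl.
Qed.
Lemma linN_compr h y : A0 y -> linN h -> linN (fun x => h (x *m y)).
Proof.
move=> hy hh r x x' hx hx' /=; rewrite mulmxDl -scalemxAl; apply: hh; exact: A0_mul.
Qed.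
Lemma linN_compl h y : A0 y -> linN h -> linN (fun x => h (y *m x)).
Proof.
move=> hy hh r x x' hx hx' /=; rewrite mulmxDr -scalemxAr; apply: hh; exact: A0_mul.
Qed.
Lemma linN_liftlin a G : is_basis_of A a -> (forall i, MI (G i)) -> linN (liftlin a G).
Proof. by move=> ha hG; apply: linN_exact => r x x' _ _; apply: liftlin_lin. Qed.

Definition eqN (Y Z : M) := N (Y - Z).
Lemma eqN_refl Y : eqN Y Y. Proof. by rewrite /eqN subrr; exact: N0. Qed.
Lemma eqN_eq Y Z : Y = Z -> eqN Y Z. Proof. by move=> ->; exact: eqN_refl. Qed.
Lemma eqN_sym Y Z : eqN Y Z -> eqN Z Y. Proof. by move=> h; rewrite /eqN -opprB; apply: NN. Qed.
Lemma eqN_trans Y Z W : eqN Y Z -> eqN Z W -> eqN Y W.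
Proof. by move=> h1 h2; rewrite /eqN -(subrKA Z); apply: ND. Qed.
Lemma eqN_D Y1 Y2 Z1 Z2 : eqN Y1 Z1 -> eqN Y2 Z2 -> eqN (Y1 + Y2) (Z1 + Z2).
Proof. by move=> h1 h2; rewrite /eqN opprD addrACA; apply: ND. Qed.
Lemma eqN_N Y Z : eqN Y Z -> eqN (- Y) (- Z).
Proof. by move=> h; rewrite /eqN -opprD; apply: NN. Qed.
Lemma eqN_B Y1 Y2 Z1 Z2 : eqN Y1 Z1 -> eqN Y2 Z2 -> eqN (Y1 - Y2) (Z1 - Z2).
Proof. by move=> h1 h2; apply: eqN_D => //; apply: eqN_N. Qed.
Lemma eqN_Z r Y Z : eqN Y Z -> eqN (r *: Y) (r *: Z).
Proof. by move=> h; rewrite /eqN -scalerBr; apply: NZ. Qed.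
Lemma eqN_sum m (F G : 'I_m -> M) : (forall i, eqN (F i) (G i)) -> eqN (\sum_i F i) (\sum_i G i).
Proof. by move=> h; rewrite /eqN -sumrB; apply: Nsum. Qed.
Lemma eqN_lmul X Y Z : A0 (map_mx kap X) -> eqN Y Z -> eqN (X *m Y) (X *m Z).
Proof. by move=> hX h; rewrite /eqN -mulmxBr; apply: N_lmul. Qed.
Lemma eqN_rmul X Y Z : A0 (map_mx kap X) -> eqN Y Z -> eqN (Y *m X) (Z *m X).
Proof. by move=> hX h; rewrite /eqN -mulmxBl; apply: N_rmul. Qed.
Lemma eqN_NN Y Z : eqN Y Z -> N Z -> N Y.
Proof. by move=> h hZ; rewrite -(subrK Z Y); apply: ND. Qed.

Lemma linN_sum_eq h m (r : 'I_m -> Rt) (x : 'I_m -> 'M[k]_n) : linN h -> (forall i, A0 (x i)) ->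
  eqN (h (\sum_i kap (r i) *: x i)) (\sum_i r i *: h (x i)).
Proof. exact: linN_sum. Qed.

Lemma lin_x f w : cochain2 kap I A0 f -> A0 w -> linN (fun x => f x w).
Proof. by move=> [_ [h _]] hw r x x' hx hx'; apply: h. Qed.
Lemma lin_y f w : cochain2 kap I A0 f -> A0 w -> linN (fun y => f w y).
Proof. by move=> [_ [_ h]] hw r x x' hx hx'; apply: h. Qed.

Section Choice.
Variables (a : 'I_d -> 'M[R]_n) (Sa : 'I_d -> M) (Sq : 'I_d -> 'I_d -> M).
Hypothesis (hc : choice_data pi A a Sa Sq).

Lemma hc_basis : is_basis_of A a. Proof. exact: hc.1. Qed.
Lemma hSa i : map_mx pi (Sa i) = a i. Proof. exact: hc.2.1. Qed.
Lemma kSa i : map_mx kap (Sa i) = map_mx rho (a i). Proof. by rewrite mapk hSa. Qed.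
Lemma A0a i : A0 (map_mx rho (a i)). Proof. by apply: A0_of_A; apply: hc.1.1. Qed.
Lemma A0Sa i : A0 (map_mx kap (Sa i)). Proof. by rewrite kSa; exact: A0a. Qed.

Definition Fc i j := Sq i j - Sa i *m Sa j.
Lemma MIF i j : MI (Fc i j).
Proof. by apply/MI_pi; rewrite map_mxB map_mxM hc.2.2.1 !hSa subrr. Qed.

Definition Tc i j : 'I_d -> Rt := proj1_sig (constructive_indefinite_description _ (hc.2.2.2 i j)).
Lemma hT i j : Sq i j = \sum_l Tc i j l *: Sa l.
Proof. by rewrite /Tc; case: constructive_indefinite_description. Qed.

Lemma prod_exp i j : map_mx rho (a i) *m map_mx rho (a j) =
  \sum_p kap (Tc i j p) *: map_mx rho (a p).
Proof.
rewrite -map_mxM -hc.2.2.1 -mapk hT map_mx_sum; apply: eq_bigr => p _.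
by rewrite map_mxZ kSa.
Qed.

Lemma SpSq i j : Sp Sa (Sq i j).
Proof. by exists (Tc i j); exact: hT. Qed.

Definition fc (x y : 'M[k]_n) : M := liftlin a (fun i => liftlin a (fun j => Fc i j) y) x.

Lemma fc_is_c : is_c_of kap rho I A a Sa Sq fc.
Proof.
have ha := hc_basis.
have hMI1 : forall y i, MI (liftlin a (fun j => Fc i j) y) by move=> y i; apply: liftlin_MI => j; apply: MIF.
split; first split.
- by move=> x y _ _; apply: liftlin_MI.
- split.
    by move=> r x x' y hx hx' hy; apply: (linN_liftlin ha (hMI1 y)).
  move=> r x y y' hx hy hy'.
  have -> : fc x (kap r *: y + y') = r *: fc x y + fc x y'.
    rewrite /fc {1}/liftlin scaler_sumr -big_split /=; apply: eq_bigr => i _.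
    rewrite liftlin_lin //; last by move=> j; apply: MIF.
    by rewrite scalerDr !scalerA mulrC.
  by rewrite subrr; exact: N0.
- move=> i j; rewrite /fc liftlin_basis // liftlin_basis ?subrr //; first exact: N0.
  by move=> l; apply: MIF.
Qed.

Lemma core_eq i j l :
  Sa i *m Fc j l - \sum_p Tc i j p *: Fc p l + \sum_q Tc j l q *: Fc i q - Fc i j *m Sa l
  = \sum_q Tc j l q *: Sq i q - \sum_p Tc i j p *: Sq p l.
Proof.
have e1 : \sum_p Tc i j p *: Fc p l = \sum_p Tc i j p *: Sq p l - Sq i j *m Sa l.
  rewrite /Fc; under eq_bigr do rewrite scalerBr; rewrite sumrB hT mulmx_suml.
  by congr (_ - _); apply: eq_bigr => p _; rewrite scalemxAl.
have e2 : \sum_q Tc j l q *: Fc i q = \sum_q Tc j l q *: Sq i q - Sa i *m Sq j l.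
  rewrite /Fc; under eq_bigr do rewrite scalerBr; rewrite sumrB (hT j l) mulmx_sumr.
  by congr (_ - _); apply: eq_bigr => p _; rewrite scalemxAr.
rewrite e1 e2 /Fc mulmxBr mulmxBl mulmxA.
exact: zc2.
Qed.

Lemma cocycle_c f : is_c_of kap rho I A a Sa Sq f -> cocycle2 kap I A0 f.
Proof.
move=> [hf hb] x y z X Z hx hy hz hX hZ.
have hMI := hf.1.
have ha := hc_basis.
rewrite (mul_kap_l (X' := map_mx Lk x) (hMI y z hy hz)) ?mapkLk //.
rewrite (mul_kap_r (X' := map_mx Lk z) (hMI x y hx hy)) ?mapkLk //.
pose C x y z := map_mx Lk x *m f y z - f (x *m y) z + f x (y *m z) - f x y *m map_mx Lk z.
have base : forall i j l, N (C (map_mx rho (a i)) (map_mx rho (a j)) (map_mx rho (a l))).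
  move=> i j l; rewrite /C.
  rewrite (mul_kap_l (X' := Sa i) (Y := f (map_mx rho (a j)) (map_mx rho (a l)))); last first.
    by rewrite mapkLk kSa.
    by apply: hMI; apply: A0a.
  rewrite (mul_kap_r (X' := Sa l) (Y := f (map_mx rho (a i)) (map_mx rho (a j)))); last first.
    by rewrite mapkLk kSa.
    by apply: hMI; apply: A0a.
  apply: (eqN_NN (Z := Sa i *m Fc j l - \sum_p Tc i j p *: Fc p l + \sum_q Tc j l q *: Fc i q
      - Fc i j *m Sa l)).
    apply: eqN_B; [apply: eqN_D; [apply: eqN_B|]|].
    - by apply: eqN_lmul; [apply: A0Sa | apply: hb].
    - rewrite prod_exp; apply: (eqN_trans (@linN_sum_eq (fun x => f x (map_mx rho (a l)))
        _ (Tc i j) (fun p => map_mx rho (a p)) (lin_x hf (A0a l)) A0a)).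
      by apply: eqN_sum => p; apply: eqN_Z; apply: hb.
    - rewrite prod_exp; apply: (eqN_trans (@linN_sum_eq (fun y => f (map_mx rho (a i)) y)
        _ (Tc j l) (fun p => map_mx rho (a p)) (lin_y hf (A0a i)) A0a)).
      by apply: eqN_sum => p; apply: eqN_Z; apply: hb.
    - by apply: eqN_rmul; [apply: A0Sa | apply: hb].
  have hM : MI (Sa i *m Fc j l - \sum_p Tc i j p *: Fc p l + \sum_q Tc j l q *: Fc i q
      - Fc i j *m Sa l).
    apply: MIB; [apply: MID; [apply: MIB|]|].
    - by apply: MIMl; apply: MIF.
    - by apply: MIsumZ => p; apply: MIF.
    - by apply: MIsumZ => p; apply: MIF.
    - by apply: MIMr; apply: MIF.
  rewrite core_eq in hM *; apply: (span_I ha hSa) => //.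
  by apply: SpB; apply: Spsum => p; apply: SpZ; apply: SpSq.
have step3 : forall i j z, A0 z -> N (C (map_mx rho (a i)) (map_mx rho (a j)) z).
  move=> i j; apply: (linN_reduce (h := fun z => C _ _ z)) ha _ => //.
  apply: linN_B; [apply: linN_D; [apply: linN_B|]|].
  - by apply: linN_lmulN; [rewrite mapkLk; apply: A0a | apply: lin_y => //; apply: A0a].
  - by apply: lin_y => //; apply: A0_mul; apply: A0a.
  - by apply: linN_compl; [apply: A0a | apply: lin_y => //; apply: A0a].
  - by apply: linN_rmul; apply: hMI; apply: A0a.
have step2 : forall i y z, A0 y -> A0 z -> N (C (map_mx rho (a i)) y z).
  move=> i y' z' hy' hz'; move: y' hy'; apply: (linN_reduce (h := fun y => C _ y z')) ha _ => //.
    apply: linN_B; [apply: linN_D; [apply: linN_B|]|].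
    - by apply: linN_lmulN; [rewrite mapkLk; apply: A0a | apply: lin_x].
    - by apply: (linN_compl (h := fun w => f w z')); [apply: A0a | apply: lin_x].
    - by apply: (linN_compr (h := fun w => f (map_mx rho (a i)) w)) => //; apply: lin_y => //; apply: A0a.
    - by apply: linN_rmulN; [rewrite mapkLk | apply: lin_y => //; apply: A0a].
  by move=> j; apply: step3.
clear hX hZ; move: x hx; apply: (linN_reduce (h := fun x => C x y z)) ha _ => //.
  apply: linN_B; [apply: linN_D; [apply: linN_B|]|].
  - by apply: linN_lmul; apply: hMI.
  - by apply: (linN_compr (h := fun w => f w z)) => //; apply: lin_x.
  - by apply: lin_x => //; apply: A0_mul.
  - by apply: linN_rmulN; [rewrite mapkLk | apply: lin_x].
by move=> i; apply: step2.
Qed.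
End Choice.

Lemma cob_reduce (F : 'M[k]_n -> 'M[k]_n -> M) (g : 'M[k]_n -> M) (a : 'I_d -> 'M[R]_n) :
  (forall w, A0 w -> linN (fun x => F x w)) -> (forall w, A0 w -> linN (fun y => F w y)) ->
  (forall x, A0 x -> MI (g x)) -> linN g -> is_basis_of A a ->
  (forall i j, N (F (map_mx rho (a i)) (map_mx rho (a j)) -
     (map_mx Lk (map_mx rho (a i)) *m g (map_mx rho (a j)) - g (map_mx rho (a i) *m map_mx rho (a j))
      + g (map_mx rho (a i)) *m map_mx Lk (map_mx rho (a j))))) ->
  forall x y (X Y : M), A0 x -> A0 y -> map_mx kap X = x -> map_mx kap Y = y ->
    N (F x y - (X *m g y - g (x *m y) + g x *m Y)).
Proof.
move=> lx ly hg lg ha base x y X Y hx hy hX hY.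
rewrite (mul_kap_l (X' := map_mx Lk x) (Y := g y)) ?mapkLk ?hX //; last exact: hg.
rewrite (mul_kap_r (X' := map_mx Lk y) (Y := g x)) ?mapkLk ?hY //; last exact: hg.
clear X Y hX hY.
have hA0a i : A0 (map_mx rho (a i)) by apply: A0_of_A; apply: ha.1.
have step : forall i y, A0 y -> N (F (map_mx rho (a i)) y -
     (map_mx Lk (map_mx rho (a i)) *m g y - g (map_mx rho (a i) *m y)
      + g (map_mx rho (a i)) *m map_mx Lk y)).
  move=> i; apply: (linN_reduce (h := fun y => F _ y - _)) ha _ => //.
  apply: linN_B; first exact: ly.
  apply: linN_D; [apply: linN_B|].
  - by apply: linN_lmulN => //; rewrite mapkLk.
  - exact: (linN_compl (h := g)).
  - by apply: linN_rmul; apply: hg.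
move: x hx; apply: (linN_reduce (h := fun x => F x y - _)) ha _ => //.
  apply: linN_B; first exact: lx.
  apply: linN_D; [apply: linN_B|].
  - by apply: linN_lmul; apply: hg.
  - exact: (linN_compr (h := g)).
  - by apply: linN_rmulN => //; rewrite mapkLk.
by move=> i; apply: step.
Qed.

Lemma core3_gen (X1 Sq' Sai Saj Ui Uj Gi Gj TU TG : M) :
  Sai = Ui + Gi -> Saj = Uj + Gj -> Gi *m Gj = 0 -> Sq' = TU + TG ->
  (X1 - Ui *m Uj) - (Sq' - Sai *m Saj) - (Ui *m Gj - TG + Gi *m Uj) = X1 - TU.
Proof.
move=> -> -> hG ->; rewrite mulmxDl !mulmxDr hG addr0.
exact: zc3.
Qed.

Lemma nsumB m1 m2 (c : 'I_m1 -> Rt) (dd : 'I_m1 -> 'I_m2 -> Rt) (P Q : 'I_m1 -> 'I_m2 -> M) :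
  \sum_l c l *: \sum_p dd l p *: (P l p - Q l p) =
  \sum_l c l *: \sum_p dd l p *: P l p - \sum_l c l *: \sum_p dd l p *: Q l p.
Proof.
rewrite -sumrB; apply: eq_bigr => l _; rewrite -scalerBr -sumrB; congr (_ *: _).
by apply: eq_bigr => p _; rewrite scalerBr.
Qed.

Lemma sumM m1 m2 (c : 'I_m1 -> Rt) (dd : 'I_m2 -> Rt) (S1 : 'I_m1 -> M) (S2 : 'I_m2 -> M) :
  (\sum_l c l *: S1 l) *m (\sum_p dd p *: S2 p) = \sum_l c l *: \sum_p dd p *: (S1 l *m S2 p).
Proof.
rewrite mulmx_suml; apply: eq_bigr => l _; rewrite -scalemxAl mulmx_sumr; congr (_ *: _).
by apply: eq_bigr => p _; rewrite scalemxAr.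
Qed.

Lemma part3 (a : 'I_d -> 'M[R]_n) Sa Sq f (a' : 'I_d -> 'M[R]_n) Sa' Sq' f' :
  choice_data pi A a Sa Sq -> is_c_of kap rho I A a Sa Sq f ->
  choice_data pi A a' Sa' Sq' -> is_c_of kap rho I A a' Sa' Sq' f' ->
  coboundary2 kap I A0 (fun x y => f x y - f' x y).
Proof.
move=> hc [hf hb] hc' [hf' hb'].
have ha := hc_basis hc; have ha' := hc_basis hc'.
have [Mr hMr] : exists Mr : 'I_d -> 'I_d -> R, forall j, a' j = \sum_l Mr j l *: a l.
  by apply: (chf (P := fun j (r : 'I_d -> R) => a' j = \sum_l r l *: a l)) => j; apply: ha.2.1; apply: ha'.1.
pose Mc j l := Lpi (Mr j l).
pose U j := \sum_l Mc j l *: Sa l.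
have hU j : map_mx pi (U j) = a' j.
  by rewrite map_mx_sum hMr; apply: eq_bigr => l _; rewrite map_mxZ piLpi (hSa hc).
have kU j : map_mx kap (U j) = map_mx rho (a' j) by rewrite mapk hU.
pose G j := Sa' j - U j.
have MIG j : MI (G j) by apply/MI_pi; rewrite map_mxB (hSa hc') hU subrr.
have ea' j : map_mx rho (a' j) = \sum_l kap (Mc j l) *: map_mx rho (a l).
  by rewrite hMr map_mx_sum; apply: eq_bigr => l _; rewrite map_mxZ -hrp piLpi.
exists (liftlin a' G); split.
  by split; [move=> x _; apply: liftlin_MI | apply: linN_liftlin].
apply: (cob_reduce _ _ _ _ ha') => //.
- by move=> w hw; apply: linN_B; [apply: lin_x | apply: lin_x].
- by move=> w hw; apply: linN_B; [apply: lin_y | apply: lin_y].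
- by move=> x _; apply: liftlin_MI.
- exact: (linN_liftlin ha' MIG).
move=> i j.
rewrite (mul_kap_l (X' := U i) (Y := liftlin a' G _)) ?mapkLk ?kU //; last exact: liftlin_MI.
rewrite (mul_kap_r (X' := U j) (Y := liftlin a' G _)) ?mapkLk ?kU //; last exact: liftlin_MI.
rewrite !(liftlin_basis _ ha') //.
pose Core := (\sum_l Mc i l *: \sum_p Mc j p *: Fc Sa Sq l p - Fc Sa' Sq' i j)
   - (U i *m G j - \sum_q Tc hc' i j q *: G q + G i *m U j).
apply: (eqN_NN (Z := Core)).
  apply: eqN_B; first apply: eqN_B.
  - rewrite {1}ea'; apply: (eqN_trans (@linN_sum_eq (fun x => f x (map_mx rho (a' j)))
        _ (Mc i) (fun p => map_mx rho (a p)) (lin_x hf (A0a hc' j)) (A0a hc))).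
    apply: eqN_sum => l; apply: eqN_Z; rewrite ea'.
    apply: (eqN_trans (@linN_sum_eq (fun y => f (map_mx rho (a l)) y)
        _ (Mc j) (fun p => map_mx rho (a p)) (lin_y hf (A0a hc l)) (A0a hc))).
    by apply: eqN_sum => p; apply: eqN_Z; apply: hb.
  - exact: hb'.
  - apply: eqN_D; last exact: eqN_refl.
    apply: eqN_B; first exact: eqN_refl.
    rewrite (prod_exp hc'); apply: (eqN_trans (@linN_sum_eq (liftlin a' G)
        _ (Tc hc' i j) (fun p => map_mx rho (a' p)) (linN_liftlin ha' MIG) (A0a hc'))).
    by apply: eqN_sum => q; apply: eqN_eq; rewrite liftlin_basis.
have MIC : MI Core.
  apply: MIB; first apply: MIB.
  - by apply: MIsumZ => l; apply: MIsumZ => p; apply: (MIF hc).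
  - exact: (MIF hc').
  apply: MID; first apply: MIB.
  - exact: MIMl.
  - exact: MIsumZ.
  - exact: MIMr.
have eC : Core = \sum_l Mc i l *: \sum_p Mc j p *: Sq l p - \sum_q Tc hc' i j q *: U q.
  have eSa q : Sa' q = U q + G q by rewrite /G addrC subrK.
  rewrite /Core /Fc nsumB -sumM; apply: core3_gen.
  - exact: eSa.
  - exact: eSa.
  - exact: MIsq.
  rewrite (hT hc') -big_split; apply: eq_bigr => l _; by rewrite eSa scalerDr.
rewrite eC in MIC *; apply: (span_I ha (hSa hc)) => //.
apply: SpB.
  by apply: Spsum => l; apply: SpZ; apply: Spsum => p; apply: SpZ; apply: (SpSq hc).
by apply: Spsum => q; apply: SpZ; apply: Spsum => l; apply: SpZ; apply: Spbase.
Qed.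

Lemma core4_gen (Sq Sai Saj Ai Aj Gi Gj TA TG : M) :
  Sai = Ai - Gi -> Saj = Aj - Gj -> Gi *m Gj = 0 -> Sq = TA - TG ->
  (Sq - Sai *m Saj) - (Ai *m Gj - TG + Gi *m Aj) = TA - Ai *m Aj.
Proof. by move=> -> -> hG ->; rewrite mulmxBl !mulmxBr hG zc5. Qed.

Lemma At_N (At : M -> Prop) W : mold d At -> (forall x, A x <-> exists y, At y /\ x = map_mx pi y) ->
  At W -> MI W -> N W.
Proof.
move=> [hAt [[At0 hAt0] [e' [bt [hb1 hb2]]]]] hiff hW hMW.
have fb := fb_of_mold hAt hAt0 hb1 hb2.
have [u hu] := hAt0.2.1 _ hW.
have eW : W = \sum_i cmb u (fun _ : 'I_e' => 0) i *: cmb At0 bt i.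
  rewrite sum_cmb [X in _ + X]big1 ?addr0; first by rewrite hu; apply: eq_bigr => i _; rewrite !cmbl.
  by move=> j _; rewrite cmbr scale0r.
have hIu : forall i, I (u i).
  move=> i; rewrite -(cmbl u (fun _ : 'I_e' => 0)).
  by apply: (fb_ideal fb hI) => p q; rewrite -eW; apply: hMW.
rewrite hu; apply: Nsum => i; apply: N_single => //.
rewrite mapk; apply: A0_of_A; apply/hiff; exists (At0 i); split => //; exact: hAt0.1.
Qed.

Lemma part4a (a : 'I_d -> 'M[R]_n) Sa Sq f (At : M -> Prop) :
  choice_data pi A a Sa Sq -> is_c_of kap rho I A a Sa Sq f ->
  mold d At -> (forall x, A x <-> exists y, At y /\ x = map_mx pi y) ->
  coboundary2 kap I A0 f.
Proof.
move=> hc [hf hb] hmo hiff.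
have ha := hc_basis hc.
have hAt := hmo.1.
have [At' hAt'] : exists At' : 'I_d -> M, forall j, At (At' j) /\ a j = map_mx pi (At' j).
  by apply: (chf (P := fun j (y : M) => At y /\ a j = map_mx pi y)) => j; apply/hiff; apply: ha.1.
pose G j := At' j - Sa j.
have MIG j : MI (G j) by apply/MI_pi; rewrite map_mxB (hSa hc) -(hAt' j).2 subrr.
have kA j : map_mx kap (At' j) = map_mx rho (a j) by rewrite mapk -(hAt' j).2.
exists (liftlin a G); split.
  by split; [move=> x _; apply: liftlin_MI | apply: linN_liftlin].
apply: (cob_reduce _ _ _ _ ha) => //.
- by move=> w hw; apply: lin_x.
- by move=> w hw; apply: lin_y.
- by move=> x _; apply: liftlin_MI.
- exact: (linN_liftlin ha MIG).
move=> i j.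
rewrite (mul_kap_l (X' := At' i) (Y := liftlin a G _)) ?mapkLk ?kA //; last exact: liftlin_MI.
rewrite (mul_kap_r (X' := At' j) (Y := liftlin a G _)) ?mapkLk ?kA //; last exact: liftlin_MI.
rewrite !(liftlin_basis _ ha) //.
pose Core := Fc Sa Sq i j - (At' i *m G j - \sum_q Tc hc i j q *: G q + G i *m At' j).
apply: (eqN_NN (Z := Core)).
  apply: eqN_B; first exact: hb.
  apply: eqN_D; last exact: eqN_refl.
  apply: eqN_B; first exact: eqN_refl.
  rewrite (prod_exp hc); apply: (eqN_trans (@linN_sum_eq (liftlin a G)
      _ (Tc hc i j) (fun p => map_mx rho (a p)) (linN_liftlin ha MIG) (A0a hc))).
  by apply: eqN_sum => q; apply: eqN_eq; rewrite liftlin_basis.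
have MIC : MI Core.
  apply: MIB; first exact: (MIF hc).
  apply: MID; first apply: MIB.
  - exact: MIMl.
  - exact: MIsumZ.
  - exact: MIMr.
have eC : Core = \sum_q Tc hc i j q *: At' q - At' i *m At' j.
  have eSa q : Sa q = At' q - G q by rewrite /G opprB addrC subrK.
  rewrite /Core /Fc; apply: core4_gen.
  - exact: eSa.
  - exact: eSa.
  - exact: MIsq.
  rewrite (hT hc) -sumrB; apply: eq_bigr => l _; by rewrite eSa scalerBr.
rewrite eC in MIC *; apply: (At_N hmo hiff) => //.
apply: subB => //; last by apply: hAt.2.2.2; [apply: (hAt' i).1 | apply: (hAt' j).1].
by apply: subsum => // q; apply: (hAt' q).1.
Qed.

Lemma fb_lift m (c : 'I_m -> M) (c' : 'I_m -> 'M[R]_n) :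
  fbasis c' -> (forall i, map_mx pi (c i) = c' i) -> fbasis c.
Proof.
move=> fb' hc.
have fk : fbasis (fun i => map_mx kap (c i)).
  apply: (fb_ext (c1 := fun i => map_mx rho (c' i))); first by move=> i; rewrite mapk hc.
  exact: (fb_map rho_surj fb').
have [lam hlam] : exists lam : 'I_n * 'I_n -> 'I_m -> k,
    forall pq, delta_mx pq.1 pq.2 = \sum_l lam pq l *: map_mx kap (c l).
  apply: (chf (P := fun pq (r : 'I_m -> k) => delta_mx pq.1 pq.2 = \sum_l r l *: map_mx kap (c l))).
  by move=> pq; apply: fk.1.
split.
- move=> Y; have [s hs] := fb'.1 (map_mx pi Y).
  pose Y1 := Y - \sum_l Lpi (s l) *: c l.
  have MIY1 : MI Y1.
    apply/MI_pi; rewrite map_mxB hs map_mx_sum; apply/eqP; rewrite subr_eq0; apply/eqP.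
    by apply: eq_bigr => l _; rewrite map_mxZ piLpi hc.
  have eY1 : Y1 = \sum_l (\sum_p \sum_q Y1 p q * Lk (lam (p, q) l)) *: c l.
    rewrite {1}[Y1]matrix_sum_delta.
    transitivity (\sum_p \sum_q \sum_l (Y1 p q * Lk (lam (p, q) l)) *: c l).
      apply: eq_bigr => p _; apply: eq_bigr => q _.
      rewrite (scale_kapM (B' := \sum_l Lk (lam (p, q) l) *: c l)) //; last first.
        rewrite map_delta_mx (hlam (p, q)) map_mx_sum; apply: eq_bigr => l _.
        by rewrite map_mxZ kLk.
      by rewrite scaler_sumr; apply: eq_bigr => l _; rewrite scalerA.
    symmetry; under eq_bigr => l _ do rewrite scaler_suml.
    rewrite exchange_big /=; apply: eq_bigr => p _.
    under eq_bigr => l _ do rewrite scaler_suml.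
    by rewrite exchange_big.
  exists (fun l => (\sum_p \sum_q Y1 p q * Lk (lam (p, q) l)) + Lpi (s l)).
  rewrite -[Y](subrK (\sum_l Lpi (s l) *: c l)) -/Y1 {1}eY1 -big_split /=.
  by apply: eq_bigr => l _; rewrite scalerDl.
- move=> r hr0.
  have Ir : forall i, I (r i).
    move=> i; apply/hpiI; move: i; apply: (fb'.2 (fun i => pi (r i))).
    have := congr1 (map_mx pi) hr0; rewrite map_mx_sum map_mx0 => h; rewrite -[RHS]h.
    apply: eq_bigr => i _; by rewrite map_mxZ hc.
  have key : forall i l, kap (\sum_p \sum_q c i p q * Lk (lam (p, q) l)) = (l == i)%:R.
    move=> i l.
    have e1 : map_mx kap (c i) =
        \sum_l (\sum_p \sum_q kap (c i p q) * lam (p, q) l) *: map_mx kap (c l).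
      rewrite {1}[map_mx kap (c i)]matrix_sum_delta.
      transitivity (\sum_p \sum_q \sum_l (kap (c i p q) * lam (p, q) l) *: map_mx kap (c l)).
        apply: eq_bigr => p _; apply: eq_bigr => q _.
        rewrite mxE (hlam (p, q)) scaler_sumr; apply: eq_bigr => l' _; by rewrite scalerA.
      symmetry; under eq_bigr => l' _ do rewrite scaler_suml.
      rewrite exchange_big /=; apply: eq_bigr => p _.
      under eq_bigr => l' _ do rewrite scaler_suml.
      by rewrite exchange_big.
    have e2 : map_mx kap (c i) = \sum_l ((l == i)%:R : k) *: map_mx kap (c l).
      rewrite (bigD1 i) //= eqxx scale1r big1 ?addr0 // => l' /negbTE ->.
      by rewrite scale0r.
    rewrite -(fb_uniq fk (etrans (esym e1) e2) l) rmorph_sum; apply: eq_bigr => p _.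
    by rewrite rmorph_sum; apply: eq_bigr => q _; rewrite rmorphM kLk.
  move=> l.
  have h0 : \sum_i r i * (\sum_p \sum_q c i p q * Lk (lam (p, q) l)) = 0.
    transitivity (\sum_p \sum_q Lk (lam (p, q) l) * (\sum_i r i *: c i) p q); last first.
      by rewrite hr0 big1 // => p _; rewrite big1 // => q _; rewrite mxE mulr0.
    transitivity (\sum_i \sum_p \sum_q r i * (c i p q * Lk (lam (p, q) l))).
      apply: eq_bigr => i _; rewrite mulr_sumr; apply: eq_bigr => p _.
      by rewrite mulr_sumr.
    rewrite exchange_big /=; apply: eq_bigr => p _.
    rewrite exchange_big /=; apply: eq_bigr => q _.
    rewrite summxE mulr_sumr; apply: eq_bigr => i _; rewrite mxE.
    ring.
  rewrite -h0; symmetry.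
  transitivity (\sum_i r i * (l == i)%:R).
    apply: eq_bigr => i _; rewrite mulrC [r i * _]mulrC; apply: Imul => //.
    by rewrite key rmorph_nat.
  rewrite (bigD1 l) //= eqxx mulr1 big1 ?addr0 // => i /negbTE hi.
  by rewrite eq_sym hi mulr0.
Qed.

Lemma core6_gen (Ai Aj Sai Saj gi gj Sq TA Tg f gab : M) :
  Ai = Sai + gi -> Aj = Saj + gj -> gi *m gj = 0 -> TA = Sq + Tg ->
  Ai *m Aj - TA = ((f - (Sq - Sai *m Saj)) - (f - (Sai *m gj - gab + gi *m Saj))) + (gab - Tg).
Proof. by move=> -> -> hg ->; rewrite mulmxDl !mulmxDr hg addr0 (zc4 _ _ _ _ _ f gab). Qed.

Lemma part4b (a : 'I_d -> 'M[R]_n) Sa Sq f g :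
  choice_data pi A a Sa Sq -> is_c_of kap rho I A a Sa Sq f ->
  cochain1 kap I A0 g ->
  (forall x y (X Y : M), A0 x -> A0 y -> map_mx kap X = x -> map_mx kap Y = y ->
      N (f x y - (X *m g y - g (x *m y) + g x *m Y))) ->
  exists At : M -> Prop, mold d At /\ forall x, A x <-> exists y, At y /\ x = map_mx pi y.
Proof.
move=> hc [hf hb] [hgM hgl] hcob.
have ha := hc_basis hc.
pose At0 i := Sa i + g (map_mx rho (a i)).
have MIg i : MI (g (map_mx rho (a i))) by apply: hgM; apply: A0a hc i.
have hA0p i : map_mx pi (At0 i) = a i.
  by rewrite map_mxD (hSa hc) (proj1 (MI_pi _) (MIg i)) addr0.
have kA0 i : map_mx kap (At0 i) = map_mx rho (a i) by rewrite mapk hA0p.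
pose bt j := map_mx Lpi (b j).
have fbA : fbasis (cmb At0 bt).
  apply: (fb_lift (c' := cmb a b)); first exact: (fb_of_mold hA ha hq1 hq2).
  by move=> i; rewrite /cmb; case: (split i) => j; [exact: hA0p | exact: mapLpi].
have N_At : forall Y, N Y -> Sp At0 Y.
  move=> Y /(N_Nsp ha (hSa hc)) [u [hu ->]]; exists u; apply: eq_bigr => i _.
  by apply: scale_kapM => //; rewrite kA0 (kSa hc).
have key : forall i j, Sp At0 (At0 i *m At0 j).
  move=> i j.
  have hd : N (At0 i *m At0 j - \sum_p Tc hc i j p *: At0 p).
    rewrite (@core6_gen (At0 i) (At0 j) (Sa i) (Sa j) (g (map_mx rho (a i)))
       (g (map_mx rho (a j))) (Sq i j) (\sum_p Tc hc i j p *: At0 p)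
       (\sum_p Tc hc i j p *: g (map_mx rho (a p)))
       (f (map_mx rho (a i)) (map_mx rho (a j)))
       (g (map_mx rho (a i) *m map_mx rho (a j)))) //.
    - apply: ND; first apply: NB.
      + exact: hb.
      + by apply: hcob; [exact: (A0a hc i) | exact: (A0a hc j) | exact: (kSa hc i) | exact: (kSa hc j)].
      + rewrite {1}(prod_exp hc).
        exact: (@linN_sum_eq g _ (Tc hc i j) (fun p => map_mx rho (a p)) hgl (A0a hc)).
    - exact: MIsq.
    - by rewrite (hT hc) -big_split; apply: eq_bigr => p _; rewrite scalerDr.
  rewrite -(subrK (\sum_p Tc hc i j p *: At0 p) (At0 i *m At0 j)).
  apply: SpD; first exact: N_At.
  by apply: Spsum => p; apply: SpZ; apply: Spbase.
have Smul : forall Y Z, Sp At0 Y -> Sp At0 Z -> Sp At0 (Y *m Z).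
  move=> Y Z [u ->] [v ->]; rewrite sumM; apply: Spsum => i; apply: SpZ.
  by apply: Spsum => j; apply: SpZ; apply: key.
have S1 : Sp At0 1%:M.
  have [rr hrr] := ha.2.1 _ hA.1.
  pose E := \sum_i Lpi (rr i) *: At0 i.
  have SE : Sp At0 E by exists (fun i => Lpi (rr i)).
  pose Y := E - 1%:M.
  have MIY : MI Y.
    apply/MI_pi; rewrite map_mxB map_mx1 hrr map_mx_sum; apply/eqP; rewrite subr_eq0; apply/eqP.
    by apply: eq_bigr => i _; rewrite map_mxZ piLpi hA0p.
  have eE : E = 1%:M + Y by rewrite /Y addrC subrK.
  have eEE : E *m E - E = Y.
    rewrite eE mulmxDl mul1mx mulmxDr mulmx1 (MIsq MIY MIY) addr0.
    by rewrite addrC addKr.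
  have -> : (1%:M : M) = E - (E *m E - E) by rewrite eEE eE addrK.
  by apply: SpB => //; apply: SpB => //; apply: Smul.
exists (Sp At0); split.
  split; first split.
  - exact: S1.
  - by split; [exact: SpD | split; [move=> r x hx; apply: SpZ | exact: Smul]].
  split.
    exists At0; split; first exact: Spbase.
    split; first by [].
    move=> r hr i; rewrite -(cmbl r (fun _ : 'I_e => 0)); apply: fbA.2.
    rewrite sum_cmb [X in _ + X]big1 ?addr0; last by move=> j _; rewrite cmbr scale0r.
    rewrite -[RHS]hr; apply: eq_bigr => i' _; by rewrite !cmbl.
  exists e, bt; split.
    move=> x; have [c hcx] := fbA.1 x; exists (fun j => c (rshift d j)).
    exists (fun i => c (lshift e i)).
    by rewrite hcx sum_cmb addrK.
  move=> r [u hu] j; rewrite -(cmbr (fun i => - u i) r); apply: fbA.2.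
  have e1 : \sum_i cmb (fun i => - u i) r (lshift e i) *: At0 i = - \sum_i u i *: At0 i.
    by rewrite -sumrN; apply: eq_bigr => i _; rewrite !cmbl scaleNr.
  have e2 : \sum_j cmb (fun i => - u i) r (rshift d j) *: bt j = \sum_j r j *: bt j.
    by apply: eq_bigr => i _; rewrite !cmbr.
  by rewrite sum_cmb e1 e2 hu addNr.
move=> x; split.
  move=> hx; have [rr ->] := ha.2.1 _ hx.
  exists (\sum_i Lpi (rr i) *: At0 i); split; first by exists (fun i => Lpi (rr i)).
  by rewrite map_mx_sum; apply: eq_bigr => i _; rewrite map_mxZ piLpi hA0p.
move=> [y [[u ->] ->]]; rewrite map_mx_sum.
have -> : \sum_i map_mx pi (u i *: At0 i) = \sum_i pi (u i) *: a i.
  by apply: eq_bigr => i _; rewrite map_mxZ hA0p.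
by apply: subsum => //; apply: ha.1.
Qed.
End Main.

Unset Implicit Arguments.

Theorem proposition3p12 (Rt R : comPzRingType) (k : fieldType)
    (kap : {rmorphism Rt -> k}) (pi : {rmorphism Rt -> R}) (rho : {rmorphism R -> k})
    (I : Rt -> Prop) (n d : nat) (A : 'M[R]_n -> Prop) :
  (* (Rt, m = ker kap, k) is an Artin local ring *)
  artinian Rt ->
  (forall y : k, exists x, kap x = y) ->
  (forall x : Rt, kap x != 0 -> exists y, x * y = 1) ->
  (* I is an ideal with m I = 0 *)
  is_ideal I ->
  (forall x y, kap x = 0 -> I y -> x * y = 0) ->
  (* R = Rt / I, with its R-algebra structure on k *)
  (forall y : R, exists x, pi x = y) ->
  (forall x, pi x = 0 <-> I x) ->
  (forall x, rho (pi x) = kap x) ->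
  (* A is a rank d mold over R *)
  mold d A ->
  (* c is well defined (a k-linear map A0 (x) A0 -> M with the prescribed values) *)
  (forall (a : 'I_d -> 'M[R]_n) Sa Sp, choice_data pi A a Sa Sp ->
     exists f, is_c_of kap rho I A a Sa Sp f) /\
  (* c is a Hochschild 2-cocycle *)
  (forall (a : 'I_d -> 'M[R]_n) Sa Sp f, choice_data pi A a Sa Sp -> is_c_of kap rho I A a Sa Sp f ->
     cocycle2 kap I (A0_of rho A) f) /\
  (* [c] does not depend on the choices *)
  (forall (a : 'I_d -> 'M[R]_n) Sa Sp f (a' : 'I_d -> 'M[R]_n) Sa' Sp' f',
     choice_data pi A a Sa Sp -> is_c_of kap rho I A a Sa Sp f ->
     choice_data pi A a' Sa' Sp' -> is_c_of kap rho I A a' Sa' Sp' f' ->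
     coboundary2 kap I (A0_of rho A) (fun x y => f x y - f' x y)) /\
  (* a lift of A to a rank d mold over Rt exists iff [c] = 0 *)
  (forall (a : 'I_d -> 'M[R]_n) Sa Sp f, choice_data pi A a Sa Sp -> is_c_of kap rho I A a Sa Sp f ->
     ((exists At : 'M[Rt]_n -> Prop, mold d At /\
         forall x, A x <-> exists y, At y /\ x = map_mx pi y)
      <-> coboundary2 kap I (A0_of rho A) f)).
Proof.
move=> _ ksurj _ hI hmI psurj hpiI hrp hmold.
have [hA [[a0 ha0] [e [b [hq1 hq2]]]]] := hmold.
split; [|split; [|split]].
- move=> a Sa Sp hc; eexists; exact: (fc_is_c ksurj hI hmI psurj hpiI hrp hA hq1 hq2 ha0 hc).
- move=> a Sa Sp f hc hf; exact: (cocycle_c ksurj hI hmI psurj hpiI hrp hA ha0 hc hf).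
- move=> a Sa Sp f a' Sa' Sp' f' hc hf hc' hf'.
  exact: (part3 ksurj hI hmI psurj hpiI hrp hA hq1 hq2 ha0 hc hf hc' hf').
- move=> a Sa Sp f hc hf; split.
  + move=> [At [hmo hiff]]; exact: (part4a ksurj hI hmI psurj hpiI hrp hA hq1 hq2 ha0 hc hf hmo hiff).
  + move=> [g [hg1 hg2]]; exact: (part4b ksurj hI hmI psurj hpiI hrp hA hq1 hq2 ha0 hc hf hg1 hg2).
Qed.
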